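(* Consider the following setting. There are $K$ arms and $T$ rounds; the loss of arm $i$ at round $t$ is $\ell_t(i)$. At the beginning of each round $t$ the learner is given numbers $m_t(i)$ and $\epsilon_t(i)\ge 0$, $i=1,\dots,K$, with the guarantee $|\ell_t(i)-m_t(i)|\le \epsilon_t(i)$ for all $i$. Let $j_t\in\arg\min_i\{m_t(i)-\epsilon_t(i)\}$ (ties broken in favour of the smallest $\epsilon_t(i)$, remaining ties arbitrarily). Call arm $i$ bad at round $t$ if $m_t(i)-\epsilon_t(i)>m_t(j_t)+\epsilon_t(j_t)$ and good otherwise. Define the transformed losses $\tilde\ell_t(i)=\ell_t(i)-m_t(j_t)+\epsilon_t(j_t)$ if $i$ is good and $\tilde\ell_t(i)=2\epsilon_t(j_t)$ if $i$ is bad. Let $\mathcal{A}$ be any online algorithm, and run the meta-algorithm which, at each round $t$: gets a recommended arm $\tilde I_t$ from $\mathcal{A}$; plays $I_t=\tilde I_t$ if $\tilde I_t$ is good and $I_t=j_t$ otherwise; and feeds $\mathcal{A}$ the feedback it would receive if the loss vector were $\tilde{\boldsymbol\ell}_t$ and its chosen arm were $\tilde I_t$. Suppose $\tilde I_t$ is drawn from a probability distribution $\tilde p_t(1),\dots,\tilde p_t(K)$, and let $p_t(1),\dots,p_t(K)$ be the induced distribution of $I_t$, i.e. $p_t(i)=\tilde p_t(i)$ if $i\ne j_t$ is good, $p_t(i)=0$ if $i$ is bad, and $p_t(j_t)=\tilde p_t(j_t)+\sum_{i\text{ bad}}\tilde p_t(i)$. Then for any fixed arm $a\in\{1,\dots,K\}$,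 \[ \sum_{t=1}^{T}\sum_{i=1}^{K}p_t(i)\ell_t(i)-\sum_{t=1}^{T}\ell_t(a)\;\le\;\sum_{t=1}^{T}\sum_{i=1}^{K}\tilde p_t(i)\tilde\ell_t(i)-\sum_{t=1}^{T}\tilde\ell_t(a). \] In particular, \[ \mathbb{E}\Big[\sum_{t=1}^{T}\ell_t(I_t)\Big]-\sum_{t=1}^{T}\ell_t(a)\;\le\;\mathbb{E}\Big[\sum_{t=1}^{T}\big(\tilde\ell_t(\tilde I_t)-\tilde\ell_t(a)\big)\Big], \] where the expectation is over the randomness of $\mathcal{A}$. Moreover, $\tilde\ell_t(i)\in[0,2(\epsilon_t(j_t)+\epsilon_t(i))]$ for every good $i$, and $\tilde\ell_t(i)=2\epsilon_t(j_t)$ for every bad $i$.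
   Context: The losses are fixed in advance by an oblivious adversary. $\mathcal{A}$ receives, after each round, a feedback that is a function $f_t(\boldsymbol\ell,I)$ of a loss vector and a chosen arm (e.g. $f_t(\boldsymbol\ell,I)=\ell(I)$ for bandit feedback, $f_t(\boldsymbol\ell,I)=\boldsymbol\ell$ for full information); it is assumed that $f_t(\tilde{\boldsymbol\ell}_t,\tilde I_t)$ can be computed from $f_t(\boldsymbol\ell_t,I_t)$ and the side information. *)

(* Defs.v *)
From HB Require Import structures.
From mathcomp Require Import all_boot all_order all_algebra.
From mathcomp Require Import all_classical all_reals all_analysis.
Set Implicit Arguments. Unset Strict Implicit. Unset Printing Implicit Defensive.
Import Order.TTheory GRing.Theory Num.Theory.
Local Open Scope ring_scope.

Section Defs.
Variables (R : realType) (K T : nat).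
Variables (m eps : 'I_T -> 'I_K -> R) (j : 'I_T -> 'I_K).

Definition good (t : 'I_T) (i : 'I_K) : bool :=
  m t i - eps t i <= m t (j t) + eps t (j t).

Definition ltil (l : 'I_T -> 'I_K -> R) (t : 'I_T) (i : 'I_K) : R :=
  if good t i then l t i - m t (j t) + eps t (j t) else 2 * eps t (j t).

Definition pmeta (pt : 'I_T -> 'I_K -> R) (t : 'I_T) (i : 'I_K) : R :=
  if i == j t then pt t (j t) + \sum_(k < K | ~~ good t k) pt t k
  else if good t i then pt t i else 0.

Definition played (t : 'I_T) (it : 'I_K) : 'I_K :=
  if good t it then it else j t.
End Defs.

(* Main.v *)
Require Import Defs.
From HB Require Import structures.
From mathcomp Require Import all_boot all_order all_algebra.
From mathcomp Require Import all_classical all_reals all_analysis.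
From mathcomp Require Import ring lra.
Import Order.TTheory GRing.Theory Num.Theory.
Local Open Scope ring_scope.

Section Aux.
Local Open Scope classical_set_scope.
Context d (Omega : measurableType d) (R : realType).

Lemma fib_meas (K : nat) (F : 'I_K -> R) (X : Omega -> 'I_K) :
  (forall i, measurable (X @^-1` [set i])) ->
  measurable_fun setT (fun w => F (X w)).
Proof.
move=> mX _ B mB; rewrite setTI.
have -> : (fun w => F (X w)) @^-1` B = \bigcup_(i in [set i | B (F i)]) X @^-1` [set i].
  apply/seteqP; split => w /=.
    by move=> Bw; exists (X w).
  by case=> i /= Bi ->.
by apply: fin_bigcup_measurable => //; exact: finite_finset.
Qed.

Lemma sum_integrable (P : probability Omega R) (K T : nat)
  (H : 'I_T -> 'I_K -> R) (It : 'I_T -> Omega -> 'I_K) :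
  (forall t i, measurable (It t @^-1` [set i])) ->
  P.-integrable setT (EFin \o (fun w => \sum_(t < T) H t (It t w))).
Proof.
move=> mI; apply: measurable_bounded_integrable.
- by [].
- by apply: (le_lt_trans (probability_le1 P measurableT)); rewrite ltry.
- by apply: measurable_sum => t; apply: fib_meas.
- exists (\sum_(t < T) \sum_(i < K) `|H t i|); split; first exact: num_real.
  move=> M hM w _ /=.
  apply: le_trans (ltW hM).
  apply: le_trans (ler_norm_sum _ _ _) _.
  apply: ler_sum => t _.
  rewrite (bigD1 (It t w)) //=.
  by rewrite lerDl; apply: sumr_ge0 => *.
Qed.
End Aux.

Theorem theorem1 (R : realType) (K T : nat)
  (l m eps : 'I_T -> 'I_K -> R) (j : 'I_T -> 'I_K)
  (heps : forall t i, 0 <= eps t i)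
  (hl : forall t i, `|l t i - m t i| <= eps t i)
  (hj_min : forall t i, m t (j t) - eps t (j t) <= m t i - eps t i)
  (hj_tie : forall t i, m t i - eps t i = m t (j t) - eps t (j t) ->
                        eps t (j t) <= eps t i)
  (a : 'I_K) :
  (forall pt : 'I_T -> 'I_K -> R,
     (forall t i, 0 <= pt t i) -> (forall t, \sum_(i < K) pt t i = 1) ->
     \sum_(t < T) \sum_(i < K) pmeta m eps j pt t i * l t i
       - \sum_(t < T) l t a
     <= \sum_(t < T) \sum_(i < K) pt t i * ltil m eps j l t i
       - \sum_(t < T) ltil m eps j l t a)
  /\
  (forall (d : measure_display) (Omega : measurableType d)
          (P : probability Omega R) (It : 'I_T -> Omega -> 'I_K),
     (forall t i, measurable (It t @^-1` [set i])) ->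
     ((\int[P]_w (\sum_(t < T) l t (played m eps j t (It t w)))%:E)
        - (\sum_(t < T) l t a)%:E
      <= \int[P]_w (\sum_(t < T)
             (ltil m eps j l t (It t w) - ltil m eps j l t a))%:E)%E)
  /\
  (forall t i, good m eps j t i ->
     0 <= ltil m eps j l t i <= 2 * (eps t (j t) + eps t i))
  /\
  (forall t i, ~~ good m eps j t i -> ltil m eps j l t i = 2 * eps t (j t)).
Proof.
have hlb : forall t i, m t i - eps t i <= l t i <= m t i + eps t i.
  move=> t i; have := hl t i; rewrite ler_norml => /andP[h1 h2].
  by apply/andP; split; lra.
have key : forall t, m t (j t) - eps t (j t) <= l t a - ltil m eps j l t a.
  move=> t; rewrite /ltil /good; case: ifP => g.
    lra.
  move/negbT: g; rewrite -ltNge => g.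
  have := hlb t a; move=> /andP[h1 h2]; lra.
have jgood : forall t, good m eps j t (j t).
  by move=> t; rewrite /good; have := heps t (j t); lra.
split.
  move=> pt hp hs.
  rewrite -!sumrB.
  apply: ler_sum => t _.
  have E1 : \sum_(i < K) pmeta m eps j pt t i * l t i =
    \sum_(i < K | good m eps j t i) pt t i * l t i +
    \sum_(i < K | ~~ good m eps j t i) pt t i * l t (j t).
    rewrite (bigID (fun i => good m eps j t i)) /=.
    rewrite [X in _ + X = _]big1; last first.
      move=> i gi; rewrite /pmeta; case: eqP => [ij|_].
        by move: gi; rewrite ij jgood.
      by rewrite (negbTE gi) mul0r.
    rewrite addr0 (bigD1 (j t)) ?jgood //= /pmeta eqxx.
    rewrite [in RHS](bigD1 (j t)) ?jgood //= mulrDl -!addrA.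
    congr (_ + _); rewrite big_distrl /= addrC; congr (_ + _).
    by apply: eq_bigr => i /andP[gi /negbTE ->]; rewrite gi.
  have E2 : \sum_(i < K) pt t i * ltil m eps j l t i =
    \sum_(i < K | good m eps j t i) pt t i * l t i
    - (m t (j t) - eps t (j t)) * \sum_(i < K | good m eps j t i) pt t i +
    \sum_(i < K | ~~ good m eps j t i) pt t i * (2 * eps t (j t)).
    rewrite (bigID (fun i => good m eps j t i)) /=.
    congr (_ + _); last by apply: eq_bigr => i gi; rewrite /ltil (negbTE gi).
    rewrite big_distrr /= -sumrB; apply: eq_bigr => i gi; rewrite /ltil gi.
    ring.
  have hs' := hs t; rewrite (bigID (fun i => good m eps j t i)) /= in hs'.
  have Eg : \sum_(i < K | good m eps j t i) pt t i =
            1 - \sum_(i < K | ~~ good m eps j t i) pt t i by rewrite -hs' addrK.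
  rewrite E1 E2 Eg.
  have B : \sum_(i < K | ~~ good m eps j t i) pt t i * l t (j t) <=
           \sum_(i < K | ~~ good m eps j t i) pt t i * (m t (j t) + eps t (j t)).
    apply: ler_sum => i _; apply: ler_wpM2l => //.
    by have /andP[] := hlb t (j t).
  have E3 : \sum_(i < K | ~~ good m eps j t i) pt t i * (m t (j t) + eps t (j t))
     = (m t (j t) - eps t (j t)) * \sum_(i < K | ~~ good m eps j t i) pt t i +
       \sum_(i < K | ~~ good m eps j t i) pt t i * (2 * eps t (j t)).
    rewrite big_distrr -big_split /=; apply: eq_bigr => i _; ring.
  have := key t; lra.
split.
  move=> d Omega P It mI.
  set C := \sum_(t < T) l t a.
  have hint := @sum_integrable _ _ _ P.
  have -> : ((\int[P]_w (\sum_(t < T) l t (played m eps j t (It t w)))%:E) - C%:E =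
     \int[P]_w ((\sum_(t < T) l t (played m eps j t (It t w)))%:E - (cst C w)%:E))%E.
    rewrite integralB_EFin //; last exact: finite_measure_integrable_cst.
      rewrite (_ : (fun x => (cst C x)%:E) = cst C%:E) // integral_cst //.
      by rewrite [X in (_ * X)%E](_ : _ = 1%E) ?mule1 //; exact: probability_setT.
    exact: (hint _ _ (fun t i => l t (played m eps j t i))).
  apply: le_integral => //.
  - have h1 := hint _ _ (fun t i => l t (played m eps j t i) - l t a) It mI.
    by apply: eq_integrable h1 => // w _ /=; rewrite sumrB EFinD.
  - exact (hint _ _ (fun t i => ltil m eps j l t i - ltil m eps j l t a) It mI).
  - move=> w _ /=; rewrite lee_fin /C -sumrB; apply: ler_sum => t _.
    move: (key t); move: (ltil m eps j l t a) => La k; rewrite /played.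
    case: (boolP (good m eps j t (It t w))) => g.
      rewrite /ltil g; lra.
    rewrite /ltil (negbTE g); have /andP[_ h] := hlb t (j t); lra.
split.
  move=> t i gi; rewrite /ltil gi; move: gi; rewrite /good => gi.
  have /andP[h1 h2] := hlb t i; have := hj_min t i; have := heps t i.
  move=> *; apply/andP; split; lra.
by move=> t i gi; rewrite /ltil (negbTE gi).
Qed.
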